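(* Let $M$ be the spacetime with metric $ds^2=-b^2(r)dt^2+f_1^2(r)dr^2+f_2^2(r)(d\theta^2+\sin^2\theta\,d\phi^2)$ ($b,f_1,f_2$ smooth and positive), with $u_k$, $\chi_k$ as in the context. Let $\kappa_1,\kappa_2,\kappa_3$ be constants and $$K_{kl}=(\kappa_2f_2^2-2\kappa_3b^2)u_ku_l+(\kappa_1+2\kappa_2f_2^2+\kappa_3b^2)g_{kl}-\kappa_2f_2^2\,\chi_k\chi_l,$$ and let $T_{kl}=(\mu+p_\perp)u_ku_l+p_\perp g_{kl}+(p_r-p_\perp)\chi_k\chi_l$ with functions $\mu(r),p_r(r),p_\perp(r)$, and $P=\tfrac13(p_r+2p_\perp)$. Then the conformal Killing gravity field equations $R_{kl}-\tfrac12Rg_{kl}=T_{kl}+K_{kl}$ are equivalent to the three scalar equations $$\tfrac12R^\star=\mu-3\kappa_3b^2-\kappa_2f_2^2-\kappa_1,\qquad D=\tfrac32P+\tfrac12\mu+2\kappa_2f_2^2+\kappa_1,\qquad \Sigma=(p_r-p_\perp)-\kappa_2f_2^2,$$ where $R^\star$, $D$, $\Sigma$ are the functions of $r$ defined in the context.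
   Context: $u_k$ has components $u_0=-b$, $u_r=u_\theta=u_\phi=0$; $\chi_k$ has components $\chi_r=f_1$ and all others zero. $R_{kl}$ is the Ricci tensor of $g$ and $R$ its trace. Primes denote $d/dr$. Define $D=\dfrac{1}{bf_1^2}\left[b''-b'\left(\dfrac{f_1'}{f_1}-2\dfrac{f_2'}{f_2}\right)\right]$ (this is $\nabla_p\dot u^p$, where $\dot u_k=u^j\nabla_ju_k$), $\Sigma=-\dfrac{1}{bf_1^2}\left[b''-b'\left(\dfrac{f_1'}{f_1}+\dfrac{f_2'}{f_2}\right)\right]-\dfrac{1}{f_1^2}\left[\dfrac{f_1^2}{f_2^2}+\dfrac{f_2''}{f_2}-\left(\dfrac{f_2'}{f_2}\right)^2-\dfrac{f_1'f_2'}{f_1f_2}\right]$, $R^\star=\dfrac{2}{f_2^2}-\dfrac{2}{f_1^2}\left[2\dfrac{f_2''}{f_2}-2\dfrac{f_1'f_2'}{f_1f_2}+\left(\dfrac{f_2'}{f_2}\right)^2\right]$. *)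

(* Defs.v *)
From Stdlib Require Import Reals Lra.
From Coquelicot Require Import Coquelicot.
Open Scope R_scope.

(** Points of the coordinate chart: a coordinate map x with
    x 0 = t, x 1 = r, x 2 = theta, x 3 = phi (other entries are irrelevant). *)
Definition pt := nat -> R.

Definition upd (x : pt) (k : nat) (s : R) : pt :=
  fun i => if Nat.eqb i k then s else x i.

Definition pd (k : nat) (f : pt -> R) (x : pt) : R :=
  Derive (fun s => f (upd x k s)) (x k).

Definition sum4 (F : nat -> R) : R := F 0%nat + F 1%nat + F 2%nat + F 3%nat.

Definition tfield := nat -> nat -> pt -> R.

Definition is_inverse_at (g ginv : tfield) (x : pt) : Prop :=
  forall i k, (i < 4)%nat -> (k < 4)%nat ->
    sum4 (fun j => g i j x * ginv j k x) = if Nat.eqb i k then 1 else 0.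

Definition christoffel (g ginv : tfield) (i k l : nat) (x : pt) : R :=
  / 2 * sum4 (fun m => ginv i m x *
     (pd k (g m l) x + pd l (g m k) x - pd m (g k l) x)).

Definition ricci (g ginv : tfield) (k l : nat) (x : pt) : R :=
  sum4 (fun j =>
    pd j (christoffel g ginv j k l) x - pd l (christoffel g ginv j k j) x
    + sum4 (fun m => christoffel g ginv j j m x * christoffel g ginv m k l x
                   - christoffel g ginv j l m x * christoffel g ginv m k j x)).

Definition scal (g ginv : tfield) (x : pt) : R :=
  sum4 (fun k => sum4 (fun l => ginv k l x * ricci g ginv k l x)).

Definition sph_metric (b f1 f2 : R -> R) : tfield :=
  fun k l x =>
    match k, l with
    | 0%nat, 0%nat => - (b (x 1%nat)) ^ 2
    | 1%nat, 1%nat => (f1 (x 1%nat)) ^ 2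
    | 2%nat, 2%nat => (f2 (x 1%nat)) ^ 2
    | 3%nat, 3%nat => (f2 (x 1%nat)) ^ 2 * (sin (x 2%nat)) ^ 2
    | _, _ => 0
    end.

Definition u_cov (b : R -> R) (k : nat) (x : pt) : R :=
  if Nat.eqb k 0 then - b (x 1%nat) else 0.
Definition chi_cov (f1 : R -> R) (k : nat) (x : pt) : R :=
  if Nat.eqb k 1 then f1 (x 1%nat) else 0.

Definition in_chart (U : R -> Prop) (x : pt) : Prop :=
  U (x 1%nat) /\ 0 < x 2%nat < PI.

Definition smooth_on (U : R -> Prop) (f : R -> R) : Prop :=
  forall n x, U x -> ex_derive (Derive_n f n) x.

Definition Ktens (b f1 f2 : R -> R) (k1 k2 k3 : R) (k l : nat) (x : pt) : R :=
  let r := x 1%nat in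
  (k2 * (f2 r) ^ 2 - 2 * k3 * (b r) ^ 2) * u_cov b k x * u_cov b l x
  + (k1 + 2 * k2 * (f2 r) ^ 2 + k3 * (b r) ^ 2) * sph_metric b f1 f2 k l x
  - k2 * (f2 r) ^ 2 * chi_cov f1 k x * chi_cov f1 l x.

Definition Ttens (b f1 f2 mu pr pp : R -> R) (k l : nat) (x : pt) : R :=
  let r := x 1%nat in
  (mu r + pp r) * u_cov b k x * u_cov b l x
  + pp r * sph_metric b f1 f2 k l x
  + (pr r - pp r) * chi_cov f1 k x * chi_cov f1 l x.

Definition ckg_eq (b f1 f2 mu pr pp : R -> R) (k1 k2 k3 : R) (ginv : tfield)
    (k l : nat) (x : pt) : Prop :=
  let g := sph_metric b f1 f2 in
  ricci g ginv k l x - / 2 * scal g ginv x * g k l x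
  = Ttens b f1 f2 mu pr pp k l x + Ktens b f1 f2 k1 k2 k3 k l x.

Definition d1 (f : R -> R) (r : R) : R := Derive f r.
Definition d2 (f : R -> R) (r : R) : R := Derive (Derive f) r.

Definition Dfun (b f1 f2 : R -> R) (r : R) : R :=
  / (b r * (f1 r) ^ 2) *
  (d2 b r - d1 b r * (d1 f1 r / f1 r - 2 * (d1 f2 r / f2 r))).

Definition Sigmafun (b f1 f2 : R -> R) (r : R) : R :=
  - (/ (b r * (f1 r) ^ 2) *
     (d2 b r - d1 b r * (d1 f1 r / f1 r + d1 f2 r / f2 r)))
  - / (f1 r) ^ 2 *
     ((f1 r) ^ 2 / (f2 r) ^ 2 + d2 f2 r / f2 r - (d1 f2 r / f2 r) ^ 2
      - d1 f1 r * d1 f2 r / (f1 r * f2 r)).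

Definition Rstar (f1 f2 : R -> R) (r : R) : R :=
  2 / (f2 r) ^ 2
  - 2 / (f1 r) ^ 2 *
     (2 * (d2 f2 r / f2 r) - 2 * (d1 f1 r * d1 f2 r / (f1 r * f2 r))
      + (d1 f2 r / f2 r) ^ 2).

(* Main.v *)
Require Import Defs.
From Stdlib Require Import Reals Lra Lia.
From Coquelicot Require Import Coquelicot.
Open Scope R_scope.

Definition Hyp_at (b f1 f2 : R -> R) (r : R) : Prop :=
  0 < b r /\ 0 < f1 r /\ 0 < f2 r /\
  ex_derive b r /\ ex_derive f1 r /\ ex_derive f2 r /\
  ex_derive (Derive b) r /\ ex_derive (Derive f1) r /\ ex_derive (Derive f2) r.

Definition dgf (b f1 f2 : R -> R) (k m l : nat) (y : pt) : R :=
  let r := y 1%nat in let th := y 2%nat in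
  match k with
  | 1%nat => match m, l with
    | 0%nat, 0%nat => - (2 * b r * Derive b r)
    | 1%nat, 1%nat => 2 * f1 r * Derive f1 r
    | 2%nat, 2%nat => 2 * f2 r * Derive f2 r
    | 3%nat, 3%nat => 2 * f2 r * Derive f2 r * sin th ^ 2
    | _, _ => 0 end
  | 2%nat => match m, l with
    | 3%nat, 3%nat => f2 r ^ 2 * (2 * sin th * cos th)
    | _, _ => 0 end
  | _ => 0 end.

Ltac fixeta b f1 f2 :=
  try change (fun x : R => b x) with b;
  try change (fun x : R => f1 x) with f1;
  try change (fun x : R => f2 x) with f2;
  try change (fun x : R => Derive b x) with (Derive b);
  try change (fun x : R => Derive f1 x) with (Derive f1);
  try change (fun x : R => Derive f2 x) with (Derive f2).

Lemma pd_g (b f1 f2 : R -> R) (y : pt) (k m l : nat) :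
  Hyp_at b f1 f2 (y 1%nat) -> (k < 4)%nat ->
  pd k (sph_metric b f1 f2 m l) y = dgf b f1 f2 k m l y.
Proof.
  intros (Hb & Hf1 & Hf2 & Db & Df1 & Df2 & DDb & DDf1 & DDf2) Hk.
  unfold pd, sph_metric, upd, dgf.
  destruct k as [|[|[|[|k]]]]; [ | | | | lia]; simpl;
  try (rewrite Derive_const; reflexivity);
  destruct m as [|[|[|[|m]]]]; destruct l as [|[|[|[|l]]]]; simpl;
  try (rewrite Derive_const; reflexivity);
  (apply is_derive_unique; auto_derive;
   [ repeat split; assumption | fixeta b f1 f2; ring ]).
Qed.

Ltac nz := repeat match goal with
         | |- _ /\ _ => split
         | |- _ * _ <> 0 => apply Rmult_integral_contrapositive_currified
         | |- - _ <> 0 => apply Ropp_neq_0_compat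
         | |- _ ^ _ <> 0 => apply pow_nonzero end; first [assumption | lra].

Definition ginv0 (b f1 f2 : R -> R) (i k : nat) (y : pt) : R :=
  if Nat.eqb i k then / sph_metric b f1 f2 i i y else 0.

Lemma sin_nz (y : pt) : 0 < y 2%nat < PI -> sin (y 2%nat) <> 0.
Proof. intros [h1 h2]. apply Rgt_not_eq. apply sin_gt_0; lra. Qed.

Lemma ginv_eq (b f1 f2 : R -> R) (ginv : tfield) (y : pt) (i k : nat) :
  Hyp_at b f1 f2 (y 1%nat) -> 0 < y 2%nat < PI ->
  is_inverse_at (sph_metric b f1 f2) ginv y -> (i < 4)%nat -> (k < 4)%nat ->
  ginv i k y = ginv0 b f1 f2 i k y.
Proof.
  intros (Hb & Hf1 & Hf2 & _) Hth Hinv Hi Hk.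
  pose proof (sin_nz y Hth) as Hs.
  specialize (Hinv i k Hi Hk). unfold sum4, ginv0 in *.
  destruct i as [|[|[|[|i]]]]; [ | | | | lia];
  destruct k as [|[|[|[|k]]]]; try lia; unfold sph_metric in *; simpl in *;
  rewrite ?Rmult_0_l, ?Rplus_0_l, ?Rplus_0_r in Hinv;
  match type of Hinv with ?a * _ = _ =>
    assert (Ha : a <> 0) by nz;
    apply (Rmult_eq_reg_l a); [ rewrite Hinv; first [field; nz | ring] | exact Ha ]
  end.
Qed.

Definition Gam (b f1 f2 : R -> R) (i k l : nat) (y : pt) : R :=
  let r := y 1%nat in let th := y 2%nat in
  match i, k, l with
  | 0%nat, 0%nat, 1%nat | 0%nat, 1%nat, 0%nat => Derive b r / b r
  | 1%nat, 0%nat, 0%nat => b r * Derive b r / f1 r ^ 2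
  | 1%nat, 1%nat, 1%nat => Derive f1 r / f1 r
  | 1%nat, 2%nat, 2%nat => - (f2 r * Derive f2 r) / f1 r ^ 2
  | 1%nat, 3%nat, 3%nat => - (f2 r * Derive f2 r * sin th ^ 2) / f1 r ^ 2
  | 2%nat, 1%nat, 2%nat | 2%nat, 2%nat, 1%nat => Derive f2 r / f2 r
  | 2%nat, 3%nat, 3%nat => - (sin th * cos th)
  | 3%nat, 1%nat, 3%nat | 3%nat, 3%nat, 1%nat => Derive f2 r / f2 r
  | 3%nat, 2%nat, 3%nat | 3%nat, 3%nat, 2%nat => cos th / sin th
  | _, _, _ => 0
  end.

Lemma chr_eq (b f1 f2 : R -> R) (ginv : tfield) (y : pt) (i k l : nat) :
  Hyp_at b f1 f2 (y 1%nat) -> 0 < y 2%nat < PI ->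
  is_inverse_at (sph_metric b f1 f2) ginv y -> (i < 4)%nat -> (k < 4)%nat -> (l < 4)%nat ->
  christoffel (sph_metric b f1 f2) ginv i k l y = Gam b f1 f2 i k l y.
Proof.
  intros Hy Hth Hinv Hi Hk Hl.
  unfold christoffel, sum4.
  rewrite !(ginv_eq b f1 f2 ginv y i) by (auto; lia).
  rewrite !(pd_g b f1 f2 y) by (auto; lia).
  pose proof (sin_nz y Hth) as Hs.
  destruct Hy as (Hb & Hf1 & Hf2 & _).
  unfold ginv0, dgf, Gam, sph_metric.
  destruct i as [|[|[|[|i]]]]; [ | | | | lia];
  destruct k as [|[|[|[|k]]]]; try lia;
  destruct l as [|[|[|[|l]]]]; try lia; simpl; field; nz.
Qed.

Definition dGam (b f1 f2 : R -> R) (j i k l : nat) (y : pt) : R :=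
  let r := y 1%nat in let th := y 2%nat in
  let B0 := b r in let B1 := Derive b r in let B2 := Derive (Derive b) r in
  let P0 := f1 r in let P1 := Derive f1 r in let P2 := Derive (Derive f1) r in
  let Q0 := f2 r in let Q1 := Derive f2 r in let Q2 := Derive (Derive f2) r in
  let s := sin th in let c := cos th in
  match j with
  | 1%nat =>
    match i, k, l with
    | 0%nat, 0%nat, 1%nat | 0%nat, 1%nat, 0%nat => (B2 * B0 - B1 ^ 2) / B0 ^ 2
    | 1%nat, 0%nat, 0%nat => ((B1 ^ 2 + B0 * B2) * P0 ^ 2 - B0 * B1 * (2 * P0 * P1)) / P0 ^ 4
    | 1%nat, 1%nat, 1%nat => (P2 * P0 - P1 ^ 2) / P0 ^ 2
    | 1%nat, 2%nat, 2%nat => - (((Q1 ^ 2 + Q0 * Q2) * P0 ^ 2 - Q0 * Q1 * (2 * P0 * P1)) / P0 ^ 4)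
    | 1%nat, 3%nat, 3%nat => - (((Q1 ^ 2 + Q0 * Q2) * P0 ^ 2 - Q0 * Q1 * (2 * P0 * P1)) / P0 ^ 4) * s ^ 2
    | 2%nat, 1%nat, 2%nat | 2%nat, 2%nat, 1%nat
    | 3%nat, 1%nat, 3%nat | 3%nat, 3%nat, 1%nat => (Q2 * Q0 - Q1 ^ 2) / Q0 ^ 2
    | _, _, _ => 0
    end
  | 2%nat =>
    match i, k, l with
    | 1%nat, 3%nat, 3%nat => - (Q0 * Q1 * (2 * s * c)) / P0 ^ 2
    | 2%nat, 3%nat, 3%nat => s ^ 2 - c ^ 2
    | 3%nat, 2%nat, 3%nat | 3%nat, 3%nat, 2%nat => - (s ^ 2 + c ^ 2) / s ^ 2
    | _, _, _ => 0
    end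
  | _ => 0
  end.

Lemma pd_Gam (b f1 f2 : R -> R) (y : pt) (j i k l : nat) :
  Hyp_at b f1 f2 (y 1%nat) -> 0 < y 2%nat < PI ->
  (j < 4)%nat -> (i < 4)%nat -> (k < 4)%nat -> (l < 4)%nat ->
  pd j (Gam b f1 f2 i k l) y = dGam b f1 f2 j i k l y.
Proof.
  intros Hy Hth Hj Hi Hk Hl.
  pose proof (sin_nz y Hth) as Hs.
  destruct Hy as (Hb & Hf1 & Hf2 & Db & Df1 & Df2 & DDb & DDf1 & DDf2).
  unfold pd, Gam, dGam, upd.
  destruct j as [|[|[|[|j]]]]; [ | | | | lia];
  destruct i as [|[|[|[|i]]]]; try lia;
  destruct k as [|[|[|[|k]]]]; try lia;
  destruct l as [|[|[|[|l]]]]; try lia; simpl;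
  try (rewrite Derive_const; reflexivity);
  (apply is_derive_unique; auto_derive;
   [ repeat split; first [assumption | nz] | fixeta b f1 f2; field; nz ]).
Qed.

Lemma loc_chart (U : R -> Prop) (x : pt) (j : nat) :
  open U -> in_chart U x -> (j < 4)%nat ->
  locally (x j) (fun s => in_chart U (upd x j s)).
Proof.
  intros HU [H1 H2] Hj.
  destruct j as [|[|[|[|j]]]]; [ | | | | lia].
  - apply filter_forall; intro s; unfold in_chart, upd; simpl; auto.
  - apply (filter_imp U); [ | apply HU; exact H1].
    intros s Hs; unfold in_chart, upd; simpl; auto.
  - apply (filter_imp (fun u => 0 < u /\ u < PI)).
    + intros s Hs; unfold in_chart, upd; simpl; auto.
    + apply (open_and _ _ (open_gt 0) (open_lt PI)). exact H2.
  - apply filter_forall; intro s; unfold in_chart, upd; simpl; auto.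
Qed.

Lemma pd_chr (U : R -> Prop) (b f1 f2 : R -> R) (ginv : tfield) (x : pt) (j i k l : nat) :
  open U -> (forall r, U r -> Hyp_at b f1 f2 r) ->
  (forall y, in_chart U y -> is_inverse_at (sph_metric b f1 f2) ginv y) ->
  in_chart U x ->
  (j < 4)%nat -> (i < 4)%nat -> (k < 4)%nat -> (l < 4)%nat ->
  pd j (christoffel (sph_metric b f1 f2) ginv i k l) x = dGam b f1 f2 j i k l x.
Proof.
  intros HU Hall Hinv Hx Hj Hi Hk Hl.
  rewrite <- (pd_Gam b f1 f2 x j i k l); auto; [ | apply Hall, Hx | apply Hx].
  unfold pd. apply Derive_ext_loc.
  apply (filter_imp (fun s => in_chart U (upd x j s))); [ | apply loc_chart; auto].
  intros s Hs. apply chr_eq; auto. apply Hall, Hs. apply Hs.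
Qed.

Definition RicE (b f1 f2 : R -> R) (k l : nat) (y : pt) : R :=
  sum4 (fun j =>
    dGam b f1 f2 j j k l y - dGam b f1 f2 l j k j y
    + sum4 (fun m => Gam b f1 f2 j j m y * Gam b f1 f2 m k l y
                   - Gam b f1 f2 j l m y * Gam b f1 f2 m k j y)).

Lemma ricci_eq (U : R -> Prop) (b f1 f2 : R -> R) (ginv : tfield) (x : pt) (k l : nat) :
  open U -> (forall r, U r -> Hyp_at b f1 f2 r) ->
  (forall y, in_chart U y -> is_inverse_at (sph_metric b f1 f2) ginv y) ->
  in_chart U x -> (k < 4)%nat -> (l < 4)%nat ->
  ricci (sph_metric b f1 f2) ginv k l x = RicE b f1 f2 k l x.
Proof.
  intros HU Hall Hinv Hx Hk Hl.
  assert (Hy : Hyp_at b f1 f2 (x 1%nat)) by (apply Hall, Hx).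
  assert (Hth : 0 < x 2%nat < PI) by apply Hx.
  assert (Hi : is_inverse_at (sph_metric b f1 f2) ginv x) by auto.
  unfold ricci, RicE, sum4.
  repeat rewrite (pd_chr U b f1 f2 ginv x) by (auto; lia).
  repeat rewrite (chr_eq b f1 f2 ginv x) by (auto; lia).
  reflexivity.
Qed.

Lemma scal_eq (U : R -> Prop) (b f1 f2 : R -> R) (ginv : tfield) (x : pt) :
  open U -> (forall r, U r -> Hyp_at b f1 f2 r) ->
  (forall y, in_chart U y -> is_inverse_at (sph_metric b f1 f2) ginv y) ->
  in_chart U x ->
  Defs.scal (sph_metric b f1 f2) ginv x =
  - RicE b f1 f2 0 0 x / b (x 1%nat) ^ 2 + RicE b f1 f2 1 1 x / f1 (x 1%nat) ^ 2
  + RicE b f1 f2 2 2 x / f2 (x 1%nat) ^ 2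
  + RicE b f1 f2 3 3 x / (f2 (x 1%nat) ^ 2 * sin (x 2%nat) ^ 2).
Proof.
  intros HU Hall Hinv Hx.
  assert (Hy : Hyp_at b f1 f2 (x 1%nat)) by (apply Hall, Hx).
  assert (Hth : 0 < x 2%nat < PI) by apply Hx.
  pose proof (sin_nz x Hth) as Hs.
  unfold Defs.scal, sum4.
  repeat rewrite (ginv_eq b f1 f2 ginv x) by (auto; lia).
  repeat rewrite (ricci_eq U b f1 f2 ginv x) by (auto; lia).
  destruct Hy as (Hb & Hf1 & Hf2 & _).
  set (R0 := RicE b f1 f2 0 0 x); set (R1 := RicE b f1 f2 1 1 x);
  set (R2 := RicE b f1 f2 2 2 x); set (R3 := RicE b f1 f2 3 3 x).
  unfold ginv0, sph_metric; simpl. field. nz.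
Qed.

Ltac genat b f1 f2 x :=
    set (S0 := sin (x 2%nat)) in *; set (C0 := cos (x 2%nat)) in *; set (B0 := b (x 1%nat)) in *;
    set (F1 := f1 (x 1%nat)) in *; set (F2 := f2 (x 1%nat)) in *;
    set (DB:= Derive b (x 1%nat)) in *; set (DF1 := Derive f1 (x 1%nat)) in *;
    set (DF2 := Derive f2 (x 1%nat)) in *;
    set (DDB:= Derive (Derive b) (x 1%nat)) in *; set (DDF1 := Derive (Derive f1) (x 1%nat)) in *;
    set (DDF2 := Derive (Derive f2) (x 1%nat)) in *;
    clearbody S0 C0 B0 F1 F2 DB DF1 DF2 DDB DDF1 DDF2.

Lemma ric_ids (b f1 f2 : R -> R) (x : pt) :
  Hyp_at b f1 f2 (x 1%nat) -> 0 < x 2%nat < PI ->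
  let r := x 1%nat in let s := sin (x 2%nat) in
  (forall k l, (k < 4)%nat -> (l < 4)%nat -> k <> l -> RicE b f1 f2 k l x = 0) /\
  RicE b f1 f2 3 3 x = s ^ 2 * RicE b f1 f2 2 2 x /\
  RicE b f1 f2 0 0 x = b r ^ 2 * Dfun b f1 f2 r /\
  RicE b f1 f2 1 1 x / f1 r ^ 2 - RicE b f1 f2 2 2 x / f2 r ^ 2 = Sigmafun b f1 f2 r /\
  RicE b f1 f2 0 0 x - / 2 *
   (- RicE b f1 f2 0 0 x / b r ^ 2 + RicE b f1 f2 1 1 x / f1 r ^ 2
    + RicE b f1 f2 2 2 x / f2 r ^ 2 + RicE b f1 f2 3 3 x / (f2 r ^ 2 * s ^ 2)) * (- b r ^ 2)
   = b r ^ 2 * (/ 2 * Rstar f1 f2 r).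
Proof.
  intros Hy Hth r s.
  pose proof (sin_nz x Hth) as Hs.
  destruct Hy as (Hb & Hf1 & Hf2 & _).
  unfold r, s; clear r s.
  split; [ | split; [ | split; [ | split]]].
  - intros k l Hk Hl Hkl.
    destruct k as [|[|[|[|k]]]]; try lia;
    destruct l as [|[|[|[|l]]]]; try lia; try congruence;
    unfold RicE, sum4, dGam, Gam; simpl; genat b f1 f2 x; field; nz.
  - unfold RicE, sum4, dGam, Gam; simpl; genat b f1 f2 x; field; nz.
  - unfold RicE, sum4, dGam, Gam, Dfun, Defs.d1, Defs.d2; simpl; genat b f1 f2 x; field; nz.
  - unfold RicE, sum4, dGam, Gam, Sigmafun, Defs.d1, Defs.d2; simpl; genat b f1 f2 x; field; nz.
  - unfold RicE, sum4, dGam, Gam, Rstar, Defs.d1, Defs.d2; simpl; genat b f1 f2 x; field; nz.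
Qed.


Lemma mul_iff (c u v : R) : c <> 0 -> (c * u = c * v <-> u = v).
Proof. intros Hc; split; intro H; [apply (Rmult_eq_reg_l c); auto | rewrite H; auto]. Qed.

Lemma iff_scale (c a b u v : R) : c <> 0 -> a - b = c * (u - v) -> (a = b <-> u = v).
Proof.
  intros Hc H; split; intro E.
  - assert (H0 : c * (u - v) = 0) by (rewrite <- H; lra).
    apply Rmult_integral in H0; destruct H0; [contradiction | lra].
  - assert (H0 : a - b = 0) by (rewrite H, E; ring). lra.
Qed.

Lemma final_alg (R0 R1 R2 R3 sc b0 F1 F2 s mu pr pp k1 k2 k3 D Sg Rs : R) :
  0 < b0 -> 0 < F1 -> 0 < F2 -> s <> 0 ->
  R3 = s ^ 2 * R2 -> R0 = b0 ^ 2 * D -> R1 / F1 ^ 2 - R2 / F2 ^ 2 = Sg ->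
  sc = - R0 / b0 ^ 2 + R1 / F1 ^ 2 + R2 / F2 ^ 2 + R3 / (F2 ^ 2 * s ^ 2) ->
  R0 - / 2 * sc * (- b0 ^ 2) = b0 ^ 2 * (/ 2 * Rs) ->
  ((R0 - / 2 * sc * (- b0 ^ 2) = mu * b0 ^ 2 + (- k2 * F2 ^ 2 - 3 * k3 * b0 ^ 2 - k1) * b0 ^ 2 /\
    R1 - / 2 * sc * F1 ^ 2 = pr * F1 ^ 2 + (k1 + k2 * F2 ^ 2 + k3 * b0 ^ 2) * F1 ^ 2 /\
    R2 - / 2 * sc * F2 ^ 2 = pp * F2 ^ 2 + (k1 + 2 * k2 * F2 ^ 2 + k3 * b0 ^ 2) * F2 ^ 2 /\
    R3 - / 2 * sc * (F2 ^ 2 * s ^ 2) = pp * (F2 ^ 2 * s ^ 2) + (k1 + 2 * k2 * F2 ^ 2 + k3 * b0 ^ 2) * (F2 ^ 2 * s ^ 2))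
   <->
   (/ 2 * Rs = mu - 3 * k3 * b0 ^ 2 - k2 * F2 ^ 2 - k1 /\
    D = 3 / 2 * (/ 3 * (pr + 2 * pp)) + / 2 * mu + 2 * k2 * F2 ^ 2 + k1 /\
    Sg = (pr - pp) - k2 * F2 ^ 2)).
Proof.
  intros Hb HF1 HF2 Hs H3 H0 HS Hsc HR.
  assert (nb : b0 ^ 2 <> 0) by (apply pow_nonzero; lra).
  assert (n1 : F1 ^ 2 <> 0) by (apply pow_nonzero; lra).
  assert (n2 : F2 ^ 2 <> 0) by (apply pow_nonzero; lra).
  assert (ns : s ^ 2 <> 0) by (apply pow_nonzero; lra).
  set (X1 := R1 / F1 ^ 2) in *. set (X2 := R2 / F2 ^ 2) in *.
  assert (E1 : R1 = F1 ^ 2 * X1) by (unfold X1; field; nz).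
  assert (E2 : R2 = F2 ^ 2 * X2) by (unfold X2; field; nz).
  clearbody X1 X2. subst R1 R2 R3 R0.
  assert (Hsc' : sc = - D + X1 + 2 * X2) by (rewrite Hsc; field; nz).
  clear Hsc. subst sc.
  assert (HR' : D + / 2 * (- D + X1 + 2 * X2) = / 2 * Rs)
    by (apply (mul_iff _ _ _ nb); rewrite <- HR; ring).
  clear HR.
  assert (I0 : b0 ^ 2 * D - / 2 * (- D + X1 + 2 * X2) * - b0 ^ 2 =
     mu * b0 ^ 2 + (- k2 * F2 ^ 2 - 3 * k3 * b0 ^ 2 - k1) * b0 ^ 2 <->
     D + / 2 * (- D + X1 + 2 * X2) = mu - k2 * F2 ^ 2 - 3 * k3 * b0 ^ 2 - k1)
    by (apply (iff_scale (b0 ^ 2)); [exact nb | ring]).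
  assert (I1 : F1 ^ 2 * X1 - / 2 * (- D + X1 + 2 * X2) * F1 ^ 2 =
     pr * F1 ^ 2 + (k1 + k2 * F2 ^ 2 + k3 * b0 ^ 2) * F1 ^ 2 <->
     X1 - / 2 * (- D + X1 + 2 * X2) = pr + k1 + k2 * F2 ^ 2 + k3 * b0 ^ 2)
    by (apply (iff_scale (F1 ^ 2)); [exact n1 | ring]).
  assert (I2 : F2 ^ 2 * X2 - / 2 * (- D + X1 + 2 * X2) * F2 ^ 2 =
     pp * F2 ^ 2 + (k1 + 2 * k2 * F2 ^ 2 + k3 * b0 ^ 2) * F2 ^ 2 <->
     X2 - / 2 * (- D + X1 + 2 * X2) = pp + k1 + 2 * k2 * F2 ^ 2 + k3 * b0 ^ 2)
    by (apply (iff_scale (F2 ^ 2)); [exact n2 | ring]).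
  assert (I3 : s ^ 2 * (F2 ^ 2 * X2) - / 2 * (- D + X1 + 2 * X2) * (F2 ^ 2 * s ^ 2) =
     pp * (F2 ^ 2 * s ^ 2) + (k1 + 2 * k2 * F2 ^ 2 + k3 * b0 ^ 2) * (F2 ^ 2 * s ^ 2) <->
     X2 - / 2 * (- D + X1 + 2 * X2) = pp + k1 + 2 * k2 * F2 ^ 2 + k3 * b0 ^ 2)
    by (apply (iff_scale (F2 ^ 2 * s ^ 2));
        [apply Rmult_integral_contrapositive_currified; assumption | ring]).
  rewrite I0, I1, I2, I3.
  set (K := k2 * F2 ^ 2) in *. set (L := k3 * b0 ^ 2) in *.
  replace (2 * k2 * F2 ^ 2) with (2 * K) by (unfold K; ring).
  replace (3 * k3 * b0 ^ 2) with (3 * L) by (unfold L; ring).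
  clearbody K L. clear I0 I1 I2 I3 nb n1 n2 ns Hs Hb HF1 HF2.
  split.
  - intros (A0 & A1 & A2 & A3). split; [ | split]; lra.
  - intros (B1 & B2 & B3). split; [ | split; [ | split]]; lra.
Qed.

Theorem proposition3 (U : R -> Prop) (b f1 f2 mu pr pp : R -> R)
    (k1 k2 k3 : R) (ginv : tfield) :
  open U ->
  smooth_on U b -> smooth_on U f1 -> smooth_on U f2 ->
  (forall r, U r -> 0 < b r /\ 0 < f1 r /\ 0 < f2 r) ->
  (forall x, in_chart U x -> is_inverse_at (sph_metric b f1 f2) ginv x) ->
  forall x : pt, in_chart U x ->
  let r := x 1%nat in
  let P := / 3 * (pr r + 2 * pp r) in
  ((forall k l, (k < 4)%nat -> (l < 4)%nat ->
      ckg_eq b f1 f2 mu pr pp k1 k2 k3 ginv k l x)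
   <->
   (/ 2 * Rstar f1 f2 r = mu r - 3 * k3 * (b r) ^ 2 - k2 * (f2 r) ^ 2 - k1 /\
    Dfun b f1 f2 r = 3 / 2 * P + / 2 * mu r + 2 * k2 * (f2 r) ^ 2 + k1 /\
    Sigmafun b f1 f2 r = (pr r - pp r) - k2 * (f2 r) ^ 2)).
Proof.
  intros HU Hb Hf1 Hf2 Hpos Hinv x Hx. cbv zeta.
  assert (Hall : forall r, U r -> Hyp_at b f1 f2 r).
  { intros r0 Hr. destruct (Hpos r0 Hr) as (p1 & p2 & p3).
    exact (conj p1 (conj p2 (conj p3 (conj (Hb 0%nat r0 Hr) (conj (Hf1 0%nat r0 Hr)
      (conj (Hf2 0%nat r0 Hr) (conj (Hb 1%nat r0 Hr) (conj (Hf1 1%nat r0 Hr) (Hf2 1%nat r0 Hr))))))))). }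
  pose proof (Hall _ (proj1 Hx)) as Hy. pose proof (proj2 Hx) as Hth.
  pose proof (ric_ids b f1 f2 x Hy Hth) as HH; cbv zeta in HH.
  destruct HH as (Hoff & H33 & HD & HS & HRs).
  assert (Eck : forall k l, (k < 4)%nat -> (l < 4)%nat ->
    (ckg_eq b f1 f2 mu pr pp k1 k2 k3 ginv k l x <->
     RicE b f1 f2 k l x - / 2 *
      (- RicE b f1 f2 0 0 x / b (x 1%nat) ^ 2 + RicE b f1 f2 1 1 x / f1 (x 1%nat) ^ 2
       + RicE b f1 f2 2 2 x / f2 (x 1%nat) ^ 2
       + RicE b f1 f2 3 3 x / (f2 (x 1%nat) ^ 2 * sin (x 2%nat) ^ 2))
      * sph_metric b f1 f2 k l x
     = Ttens b f1 f2 mu pr pp k l x + Ktens b f1 f2 k1 k2 k3 k l x)).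
  { intros k l Hk Hl. unfold ckg_eq; cbv zeta.
    rewrite (ricci_eq U b f1 f2 ginv x k l), (scal_eq U b f1 f2 ginv x); auto; reflexivity. }
  assert (T0 : Ttens b f1 f2 mu pr pp 0 0 x + Ktens b f1 f2 k1 k2 k3 0 0 x =
    mu (x 1%nat) * b (x 1%nat) ^ 2 + (- k2 * f2 (x 1%nat) ^ 2 - 3 * k3 * b (x 1%nat) ^ 2 - k1) * b (x 1%nat) ^ 2)
    by (unfold Ttens, Ktens, u_cov, chi_cov, sph_metric; simpl; ring).
  assert (T1 : Ttens b f1 f2 mu pr pp 1 1 x + Ktens b f1 f2 k1 k2 k3 1 1 x =
    pr (x 1%nat) * f1 (x 1%nat) ^ 2 + (k1 + k2 * f2 (x 1%nat) ^ 2 + k3 * b (x 1%nat) ^ 2) * f1 (x 1%nat) ^ 2)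
    by (unfold Ttens, Ktens, u_cov, chi_cov, sph_metric; simpl; ring).
  assert (T2 : Ttens b f1 f2 mu pr pp 2 2 x + Ktens b f1 f2 k1 k2 k3 2 2 x =
    pp (x 1%nat) * f2 (x 1%nat) ^ 2 + (k1 + 2 * k2 * f2 (x 1%nat) ^ 2 + k3 * b (x 1%nat) ^ 2) * f2 (x 1%nat) ^ 2)
    by (unfold Ttens, Ktens, u_cov, chi_cov, sph_metric; simpl; ring).
  assert (T3 : Ttens b f1 f2 mu pr pp 3 3 x + Ktens b f1 f2 k1 k2 k3 3 3 x =
    pp (x 1%nat) * (f2 (x 1%nat) ^ 2 * sin (x 2%nat) ^ 2) + (k1 + 2 * k2 * f2 (x 1%nat) ^ 2 + k3 * b (x 1%nat) ^ 2) * (f2 (x 1%nat) ^ 2 * sin (x 2%nat) ^ 2))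
    by (unfold Ttens, Ktens, u_cov, chi_cov, sph_metric; simpl; ring).
  assert (G0 : sph_metric b f1 f2 0%nat 0%nat x = - b (x 1%nat) ^ 2) by reflexivity.
  assert (G1 : sph_metric b f1 f2 1%nat 1%nat x = f1 (x 1%nat) ^ 2) by reflexivity.
  assert (G2 : sph_metric b f1 f2 2%nat 2%nat x = f2 (x 1%nat) ^ 2) by reflexivity.
  assert (G3 : sph_metric b f1 f2 3%nat 3%nat x = f2 (x 1%nat) ^ 2 * sin (x 2%nat) ^ 2) by reflexivity.
  destruct Hy as (Hb0 & Hf10 & Hf20 & _).
  pose proof (sin_nz x Hth) as Hs.
  pose proof (final_alg (RicE b f1 f2 0 0 x) (RicE b f1 f2 1 1 x) (RicE b f1 f2 2 2 x) (RicE b f1 f2 3 3 x)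
     _ (b (x 1%nat)) (f1 (x 1%nat)) (f2 (x 1%nat)) (sin (x 2%nat))
     (mu (x 1%nat)) (pr (x 1%nat)) (pp (x 1%nat)) k1 k2 k3 _ _ _ Hb0 Hf10 Hf20 Hs H33 HD HS eq_refl HRs) as FA.
  split.
  - intro H. apply FA.
    pose proof (proj1 (Eck 0%nat 0%nat ltac:(lia) ltac:(lia)) (H 0%nat 0%nat ltac:(lia) ltac:(lia))) as E0.
    pose proof (proj1 (Eck 1%nat 1%nat ltac:(lia) ltac:(lia)) (H 1%nat 1%nat ltac:(lia) ltac:(lia))) as E1.
    pose proof (proj1 (Eck 2%nat 2%nat ltac:(lia) ltac:(lia)) (H 2%nat 2%nat ltac:(lia) ltac:(lia))) as E2.
    pose proof (proj1 (Eck 3%nat 3%nat ltac:(lia) ltac:(lia)) (H 3%nat 3%nat ltac:(lia) ltac:(lia))) as E3.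
    rewrite T0, G0 in E0. rewrite T1, G1 in E1. rewrite T2, G2 in E2. rewrite T3, G3 in E3.
    auto.
  - intro H. destruct (proj2 FA H) as (E0 & E1 & E2 & E3).
    intros k l Hk Hl. apply Eck; auto.
    destruct k as [|[|[|[|k]]]]; try lia; destruct l as [|[|[|[|l]]]]; try lia;
    first
      [ rewrite T0, G0; exact E0 | rewrite T1, G1; exact E1
      | rewrite T2, G2; exact E2 | rewrite T3, G3; exact E3
      | rewrite Hoff by lia;
        unfold Ttens, Ktens, u_cov, chi_cov, sph_metric; simpl; ring ].
Qed.
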